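(* Let $\Upsilon$ be a toral relatively hyperbolic group, $H\le\Upsilon$ a subgroup, and $\mathcal P$ a collection of nontrivial abelian subgroups of $H$. If $(H,\mathcal P)$ is relatively immutable in $\Upsilon$, then so is $(H,\mathcal P')$, where $\mathcal P'=\{Z_H(P)\mid P\in\mathcal P\}$ and $Z_H(P)$ denotes the centralizer of $P$ in $H$. Also, if $(H,\mathcal P)$ is relatively immutable in $\Upsilon$, then so is $(H,\mathcal P_0)$, where $\mathcal P_0$ consists of a collection of $H$-conjugacy representatives of the elements of $\mathcal P$.
   Context: A group is toral relatively hyperbolic if it is torsion-free and hyperbolic relative to finitely generated abelian subgroups. $\mathrm{Hom}_{\mathcal P}(H,\Upsilon)$ is the set of homomorphisms $\lambda\colon H\to\Upsilon$ such that for each $P\in\mathcal P$, $\lambda|_P$ is the restriction to $P$ of an inner automorphism of $\Upsilon$ (depending on $P$). $(H,\mathcal P)$ is relatively immutable in $\Upsilon$ if $\mathrm{Hom}_{\mathcal P}(H,\Upsilon)$ contains only finitely many $\Upsilon$-conjugacy classes of injective homomorphisms. *)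

(* Defs.v *)
From Stdlib Require Import List Arith Lia.
Import ListNotations.
Set Implicit Arguments.

Record group := Group {
  gcar :> Type;
  gmul : gcar -> gcar -> gcar;
  gone : gcar;
  ginv : gcar -> gcar;
  gmulA : forall x y z, gmul x (gmul y z) = gmul (gmul x y) z;
  gmul1l : forall x, gmul gone x = x;
  gmulVl : forall x, gmul (ginv x) x = gone }.

Arguments gmul {g}. Arguments gone {g}. Arguments ginv {g}.

Section GroupDefs.
Variable G : group.

Definition finite_set {T : Type} (A : T -> Prop) : Prop :=
  exists l : list T, forall x, A x -> In x l.

Definition conj (g x : G) : G := gmul (ginv g) (gmul x g).

Fixpoint gpow (x : G) (n : nat) : G :=
  match n with O => gone | S m => gmul x (gpow x m) end.

Definition is_subgroup (H : G -> Prop) : Prop :=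
  H gone /\ (forall x y, H x -> H y -> H (gmul x y)) /\
  (forall x, H x -> H (ginv x)).

Definition abelian (P : G -> Prop) : Prop :=
  forall x y, P x -> P y -> gmul x y = gmul y x.

Definition fg_subgroup (H : G -> Prop) : Prop :=
  is_subgroup H /\
  exists S : list G, (forall s, In s S -> H s) /\
    forall K, is_subgroup K -> (forall s, In s S -> K s) -> forall x, H x -> K x.

Definition fg_group : Prop := fg_subgroup (fun _ => True).

Definition torsion_free : Prop :=
  forall (x : G) (n : nat), x <> gone -> gpow x (S n) <> gone.

Definition conj_subsets (A B : G -> Prop) : Prop :=
  exists g, forall x, A x <-> B (conj g x).

Definition conj_in (H A B : G -> Prop) : Prop :=
  exists h, H h /\ forall x, A x <-> B (conj h x).

Definition centralizer (H P : G -> Prop) : G -> Prop :=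
  fun x => H x /\ forall p, P p -> gmul x p = gmul p x.

Section Graphs.
Variable V : Type.
Variable adj : V -> V -> Prop.

Inductive walk : V -> V -> nat -> Prop :=
| walk0 u : walk u u 0
| walkS u w v n : adj u w -> walk w v n -> walk u v (S n).

Definition gdist (u v : V) (n : nat) : Prop :=
  walk u v n /\ forall m, walk u v m -> n <= m.

Definition connected_graph : Prop := forall u v, exists n, walk u v n.

Definition hyperbolic_graph : Prop :=
  exists delta : nat, forall x y z w dxy dzw dxz dyw dxw dyz,
    gdist x y dxy -> gdist z w dzw -> gdist x z dxz -> gdist y w dyw ->
    gdist x w dxw -> gdist y z dyz ->
    dxy + dzw <= Nat.max (dxz + dyw) (dxw + dyz) + 2 * delta.

Fixpoint chain (l : list V) : Prop :=
  match l with
  | x :: ((y :: _) as t) => adj x y /\ chain t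
  | _ => True
  end.

(** a circuit: a closed path without repeated vertices, of length >= 3,
    given by its cyclic list of vertices *)
Definition circuit (l : list V) : Prop :=
  NoDup l /\ 3 <= length l /\ chain (l ++ firstn 1 l).

Definition circuit_contains_edge (a b : V) (l : list V) : Prop :=
  exists l1 l2, l ++ firstn 1 l = l1 ++ a :: b :: l2 \/
                l ++ firstn 1 l = l1 ++ b :: a :: l2.

Definition fine_graph : Prop :=
  forall a b, adj a b -> forall n,
    finite_set (fun l => circuit l /\ length l = n /\ circuit_contains_edge a b l).

End Graphs.

Definition is_graph_action (V : Type) (adj : V -> V -> Prop) (act : G -> V -> V) : Prop :=
  (forall v, act gone v = v) /\
  (forall g h v, act (gmul g h) v = act g (act h v)) /\
  (forall g u v, adj u v -> adj (act g u) (act g v)).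

(** (G, Ps) relatively hyperbolic in the sense of Bowditch: G acts on a
    connected, fine, hyperbolic graph with finite edge stabilizers and finitely
    many orbits of edges, and Ps is a set of representatives of the conjugacy
    classes of infinite vertex stabilizers. *)
Definition rel_hyperbolic (Ps : list (G -> Prop)) : Prop :=
  exists (V : Type) (adj : V -> V -> Prop) (act : G -> V -> V),
    (forall u v, adj u v -> adj v u) /\ (forall u, ~ adj u u) /\
    connected_graph adj /\ hyperbolic_graph adj /\ fine_graph adj /\
    is_graph_action adj act /\
    (forall u v, adj u v ->
       finite_set (fun g => (act g u = u /\ act g v = v) \/
                            (act g u = v /\ act g v = u))) /\
    (exists E : list (V * V), forall u v, adj u v ->
       exists a b g, In (a, b) E /\
         ((act g a = u /\ act g b = v) \/ (act g a = v /\ act g b = u))) /\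
    (forall P, In P Ps ->
       exists v, (forall g, P g <-> act g v = v) /\ ~ finite_set P) /\
    (forall v, ~ finite_set (fun g => act g v = v) ->
       exists P, In P Ps /\ conj_subsets (fun g => act g v = v) P) /\
    (forall i j, i < length Ps -> j < length Ps ->
       conj_subsets (nth i Ps (fun _ => False)) (nth j Ps (fun _ => False)) ->
       i = j).

Definition toral_rel_hyp : Prop :=
  torsion_free /\ fg_group /\
  exists Ps : list (G -> Prop),
    (forall P, In P Ps -> is_subgroup P /\ abelian P /\ fg_subgroup P) /\
    rel_hyperbolic Ps.

(** * Relative immutability.  Homomorphisms H -> G are represented by
    functions G -> G, only their values on H mattering. *)
Definition hom_on (H : G -> Prop) (lam : G -> G) : Prop :=
  forall x y, H x -> H y -> lam (gmul x y) = gmul (lam x) (lam y).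

Definition injective_on (H : G -> Prop) (lam : G -> G) : Prop :=
  forall x y, H x -> H y -> lam x = lam y -> x = y.

Definition in_HomP (H : G -> Prop) (Ps : (G -> Prop) -> Prop) (lam : G -> G) : Prop :=
  hom_on H lam /\
  forall P, Ps P -> exists g, forall x, P x -> lam x = conj g x.

Definition conj_homs (H : G -> Prop) (lam mu : G -> G) : Prop :=
  exists g, forall x, H x -> mu x = conj g (lam x).

Definition rel_immutable (H : G -> Prop) (Ps : (G -> Prop) -> Prop) : Prop :=
  exists L : list (G -> G),
    (forall mu, In mu L -> in_HomP H Ps mu /\ injective_on H mu) /\
    forall lam, in_HomP H Ps lam -> injective_on H lam ->
      exists mu, In mu L /\ conj_homs H mu lam.

End GroupDefs.

(* Main.v *)
Require Import Defs.
From Stdlib Require Import List Classical.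
Import ListNotations.

Section Aux.
Variable G : group.

Lemma mulgV (x : G) : gmul x (ginv x) = gone.
Proof.
  rewrite <- (gmul1l G (gmul x (ginv x))).
  rewrite <- (gmulVl G (ginv x)) at 1.
  rewrite <- gmulA. rewrite (gmulA G (ginv x) x (ginv x)).
  rewrite gmulVl, gmul1l. apply gmulVl.
Qed.

Lemma mulg1 (x : G) : gmul x gone = x.
Proof. rewrite <- (gmulVl G x), gmulA, mulgV. apply gmul1l. Qed.

Lemma inv_uniq (a b : G) : gmul a b = gone -> b = ginv a.
Proof.
  intro E. rewrite <- (gmul1l G b), <- (gmulVl G a), <- gmulA, E. apply mulg1.
Qed.

Lemma invK (x : G) : ginv (ginv x) = x.
Proof. symmetry. apply inv_uniq. apply gmulVl. Qed.

Lemma invM (x y : G) : ginv (gmul x y) = gmul (ginv y) (ginv x).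
Proof.
  symmetry. apply inv_uniq.
  rewrite gmulA, <- (gmulA G x y), mulgV, mulg1. apply mulgV.
Qed.

Lemma conj_comp (a b x : G) : conj G a (conj G b x) = conj G (gmul b a) x.
Proof.
  unfold conj. rewrite invM. rewrite !gmulA. reflexivity.
Qed.

Lemma conj1 (x : G) : conj G gone x = x.
Proof.
  unfold conj. rewrite mulg1. rewrite <- (inv_uniq gone gone) by apply mulg1.
  apply gmul1l.
Qed.

Lemma conjK (g x : G) : conj G (ginv g) (conj G g x) = x.
Proof. rewrite conj_comp, mulgV. apply conj1. Qed.

Lemma idem1 (e : G) : gmul e e = e -> e = gone.
Proof.
  intro E. assert (A : gmul (ginv e) (gmul e e) = gmul (ginv e) e) by (rewrite E; auto).
  rewrite gmulA, gmulVl, gmul1l in A. exact A.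
Qed.

Lemma hom_inv (H : G -> Prop) lam (h : G) :
  is_subgroup G H -> hom_on G H lam -> H h -> lam (ginv h) = ginv (lam h).
Proof.
  intros [H1 [HM HI]] Hl Hh. apply inv_uniq.
  rewrite <- Hl by auto. rewrite mulgV.
  apply idem1. rewrite <- Hl by auto. rewrite mulg1. reflexivity.
Qed.

Lemma conj_homs_trans (H : G -> Prop) mu l1 l2 :
  conj_homs G H mu l1 -> conj_homs G H mu l2 -> conj_homs G H l1 l2.
Proof.
  intros [g1 E1] [g2 E2]. exists (gmul (ginv g1) g2). intros x Hx.
  rewrite E2, E1 by auto. rewrite <- conj_comp. f_equal.
  rewrite conjK. reflexivity.
Qed.

Lemma immut_mono (H : G -> Prop) (Ps Qs : (G -> Prop) -> Prop) :
  (forall lam, in_HomP G H Qs lam -> injective_on G H lam -> in_HomP G H Ps lam) ->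
  rel_immutable G H Ps -> rel_immutable G H Qs.
Proof.
  intros Hinc [L [_ HL]].
  assert (K : forall L : list (G -> G), exists L' : list (G -> G),
    (forall mu, In mu L' -> in_HomP G H Qs mu /\ injective_on G H mu) /\
    forall lam, in_HomP G H Qs lam -> injective_on G H lam ->
      (exists mu, In mu L /\ conj_homs G H mu lam) ->
      exists mu, In mu L' /\ conj_homs G H mu lam).
  { induction L0 as [|m L0 [L' [A B]]].
    - exists nil. split. intros mu []. intros lam _ _ [mu [[] _]].
    - destruct (classic (exists lam, in_HomP G H Qs lam /\ injective_on G H lam
                          /\ conj_homs G H m lam)) as [[l0 [Q1 [Q2 Q3]]]|N].
      + exists (l0 :: L'). split.
        * intros mu [<-|I]; auto.
        * intros lam Hq Hi [mu [[<-|I] C]].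
          -- exists l0. split. left; auto. eapply conj_homs_trans; eauto.
          -- destruct (B lam Hq Hi (ex_intro _ mu (Logic.conj I C))) as [mu' [I' C']].
             exists mu'. split; auto. right; auto.
      + exists L'. split; auto.
        intros lam Hq Hi [mu [[<-|I] C]].
        * exfalso. apply N. exists lam. auto.
        * apply B; eauto. }
  destruct (K L) as [L' [A B]]. exists L'. split; auto.
Qed.

End Aux.

Theorem lemma6p16 (G : group) (H : G -> Prop) (Ps : (G -> Prop) -> Prop) :
  toral_rel_hyp G ->
  is_subgroup G H ->
  (forall P, Ps P ->
     is_subgroup G P /\ (forall x, P x -> H x) /\ abelian G P /\
     exists x, P x /\ x <> gone) ->
  rel_immutable G H Ps ->
  rel_immutable G H (fun Q => exists P, Ps P /\ Q = centralizer G H P) /\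
  (forall P0 : (G -> Prop) -> Prop,
     (forall Q, P0 Q -> Ps Q) ->
     (forall P, Ps P -> exists Q, P0 Q /\ conj_in G H P Q) ->
     (forall Q1 Q2, P0 Q1 -> P0 Q2 -> conj_in G H Q1 Q2 -> Q1 = Q2) ->
     rel_immutable G H P0).
Proof.
  intros _ HH HP Himm. split.
  - apply (@immut_mono G H Ps); auto.
    intros lam [Hh Hc] _. split; auto.
    intros P HPs. destruct (Hc (centralizer G H P) (ex_intro _ P (Logic.conj HPs eq_refl)))
      as [g Hg].
    exists g. intros x Px. apply Hg.
    destruct (HP P HPs) as [_ [PH [Pab _]]]. split; auto.
  - intros P0 Hsub Hrep _. apply (@immut_mono G H Ps); auto.
    intros lam [Hh Hc] _. split; auto.
    intros P HPs. destruct (Hrep P HPs) as [Q [HQ [h [Hh' Hconj]]]].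
    destruct (Hc Q HQ) as [g Hg].
    exists (gmul (gmul h g) (ginv (lam h))). intros x Px.
    pose proof (proj1 (Hconj x) Px) as Qy.
    destruct (HP Q (Hsub Q HQ)) as [_ [QH _]].
    destruct HH as [H1 [HM HI]].
    assert (Ex : x = gmul h (gmul (conj G h x) (ginv h))).
    { unfold conj. rewrite !gmulA. rewrite mulgV, gmul1l, <- gmulA, mulgV, mulg1.
      reflexivity. }
    rewrite Ex at 1. rewrite Hh, Hh by auto.
    rewrite (@hom_inv G H lam h) by (try split; auto).
    rewrite (Hg _ Qy). rewrite <- conj_comp, <- conj_comp. unfold conj at 3. rewrite invK. reflexivity.
Qed.
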